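(* Let $g\ge 2$ and let $C$ be a stable curve of compact type of genus $g$ with irreducible components $X_1,\dots,X_\gamma$, and let $X^{pr}$ be the principal component of $C$. Let $\underline e_1$ be the multidegree with $(e_1)_{X^{pr}}=1$ and $(e_1)_X=0$ for every irreducible component $X\ne X^{pr}$. Then: (i) $\underline e_1$ is the unique $X^{pr}$-quasistable multidegree of total degree $1$ on $C$; equivalently $J^{1,X^{pr}}_C=J^{\underline e_1}_C$; (ii) for every $q\in C$ the line bundle $\alpha^1_C(q)$ has multidegree $\underline e_1$, i.e. $\alpha^1_C$ factors through $J^{\underline e_1}_C\subset J^{1,ss}_C$.
   Context: All curves are connected, projective, reduced, nodal, over an algebraically closed field. $g_C=1-\chi(\mathcal O_C)$. Subcurve: union of irreducible components; $Y'$ is the closure of the complement of $Y$, $k_Y=\#(Y\cap Y')$. A tail is a subcurve $Z$ with $k_Z=1$. Compact type: every node is separating (the intersection of two tails $Z,Z'$, $Z\cap Z'=\{n\}$). Stable: every smooth rational component meets the rest in at least 3 points. For a line bundle $L$ on $C$ with components $X_1,\dots,X_\gamma$, its multidegree is $\underline d=(\deg L|_{X_1},\dots,\deg L|_{X_\gamma})$, total degree $d=\sum d_i$, and $d_Y:=\sum_{X_i\subseteq Y}d_i$. $J^{\underline d}_C$ is the locus of line bundles of multidegree $\underline d$; for $C$ of compact type, restriction gives $J^{\underline d}_C\cong\prod_i J^{d_i}_{X_i}$. $\omega_C$ is the dualizing sheaf, $\deg\omega_C|_Y=2g_Y-2+k_Y$. A multidegree $\underline d$ of total degree $d$ on $C$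 of genus $g\ge2$ is semistable if for every non-empty proper subcurve $Y$: $\left|d_Y-\frac{d}{2g-2}\deg\omega_C|_Y\right|\le \frac{k_Y}{2}$; for an irreducible component $X$, it is $X$-quasistable if it is semistable and moreover $d_Y-\frac{d}{2g-2}\deg\omega_C|_Y>-\frac{k_Y}{2}$ for every proper subcurve $Y\supseteq X$. $J^{1,ss}_C$ (resp. $J^{1,X}_C$) is the union of $J^{\underline d}_C$ over semistable (resp. $X$-quasistable) $\underline d$ of total degree 1. Central/semicentral: a component $X$ is central (resp. semicentral) if each connected component $Z$ of $X'$ has $g_Z<g_C/2$ (resp. $\le g_C/2$). A stable curve of compact type has either exactly one central component, or (exactly when some node is the intersection of two tails of genus $g/2$) no central component and exactly two semicentral ones, which meet. The principal component $X^{pr}$ is the central component in the first case, and a fixed choice of one of the two semicentral components in the second. A tail $Z$ is small if $g_Z<g_C/2$, or $g_Z=g_C/2$ and $X^{pr}\subseteq Z'$. For a tail $Z$ of a compact-type curve with $Z\cap Z'=\{n\}$, $\mathcal O_C(Z)$ is the line bundle with $\mathcal O_C(Z)|_Z\cong\mathcal O_Z(-n)$ and $\mathcal O_C(Z)|_{Z'}\cong\mathcal O_{Z'}(n)$ (equivalently $\mathcal O_{\mathcal C}(Z)|_C$ for any smoothing $\mathcal C$ of $C$). For $q\in C$, let $\mathcal N_q=\mathcal O_C(q)$ if $q$ is a smooth point, and if $q$ is a node with small tail $Z$ at $q$, let $\mathcal N_q$ be the line bundle with $\mathcal N_q|_Z=\mathcal O_Z(q)$, $\mathcal N_q|_{Z'}=\mathcal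 O_{Z'}$. The first Abel map of $C$ is $\alpha^1_C(q):=\mathcal N_q\otimes\bigotimes_{Z\text{ small tail},\,q\in Z}\mathcal O_C(Z)$. *)

(* Defs.v *)
(* Combinatorial model of a stable curve of compact type:
   components = 'I_n, dual graph = e (simple graph), geometric genera = gen. *)
From HB Require Import structures.
From mathcomp Require Import all_boot all_order all_algebra.
Set Implicit Arguments. Unset Strict Implicit. Unset Printing Implicit Defensive.
Import Order.TTheory GRing.Theory Num.Theory.
Local Open Scope ring_scope.

Section Curves.
Variables (n : nat) (e : rel 'I_n) (gen : 'I_n -> nat).

(* dual graph of a curve with no self-nodes and at most one node between two components *)
Definition simple_graph : Prop := symmetric e /\ irreflexive e.

Definition induced (Y : {set 'I_n}) : rel 'I_n :=
  fun i j => [&& e i j, i \in Y & j \in Y].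

Definition connectedb (Y : {set 'I_n}) : bool :=
  [forall i in Y, forall j in Y, connect (induced Y) i j].

Definition remove_edge (a b : 'I_n) : rel 'I_n :=
  fun i j => e i j && ~~ (((i == a) && (j == b)) || ((i == b) && (j == a))).

(* C connected and every node separating *)
Definition compact_type : Prop :=
  connectedb setT /\ forall a b, e a b -> ~~ connect (remove_edge a b) a b.

Definition nedges_in (Y : {set 'I_n}) : nat :=
  #|[set p : 'I_n * 'I_n | [&& (val p.1 < val p.2)%N, e p.1 p.2, p.1 \in Y & p.2 \in Y]]|.

Definition kY (Y : {set 'I_n}) : nat :=
  #|[set p : 'I_n * 'I_n | [&& e p.1 p.2, p.1 \in Y & p.2 \notin Y]]|.

(* g_Y = 1 - chi(O_Y) = sum g_i - #components + #internal nodes + 1 *)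
Definition genusY (Y : {set 'I_n}) : int :=
  (\sum_(i in Y) (gen i)%:Z) - (#|Y|)%:Z + (nedges_in Y)%:Z + 1.

Definition genusC : int := genusY setT.

Definition degomega (Y : {set 'I_n}) : int := 2 * genusY Y - 2 + (kY Y)%:Z.

Definition stable : Prop :=
  forall i, gen i = 0%N -> (3 <= #|[set j | e i j]|)%N.

Definition multideg := 'I_n -> int.

Definition degY (d : multideg) (Y : {set 'I_n}) : int := \sum_(i in Y) d i.
Definition totdeg (d : multideg) : int := degY d setT.

Definition slope (d : multideg) : rat :=
  ((totdeg d)%:~R : rat) / ((2 * genusC - 2)%:~R : rat).

Definition semistable (d : multideg) : Prop :=
  forall Y : {set 'I_n}, Y != set0 -> Y != setT ->
    `|((degY d Y)%:~R : rat) - slope d * ((degomega Y)%:~R : rat)|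
      <= ((kY Y)%:~R : rat) / 2.

Definition quasistable (X : 'I_n) (d : multideg) : Prop :=
  semistable d /\
  forall Y : {set 'I_n}, X \in Y -> Y != setT ->
    ((degY d Y)%:~R : rat) - slope d * ((degomega Y)%:~R : rat)
      > - (((kY Y)%:~R : rat) / 2).

Definition conn_component_of (Y Z : {set 'I_n}) : bool :=
  [&& Z \subset Y, Z != set0, connectedb Z &
      [forall i in Z, forall j in Y :\: Z, ~~ e i j]].

Definition central (X : 'I_n) : Prop :=
  forall Z, conn_component_of (~: [set X]) Z -> 2 * genusY Z < genusC.

Definition semicentral (X : 'I_n) : Prop :=
  forall Z, conn_component_of (~: [set X]) Z -> 2 * genusY Z <= genusC.

(* X is (a legitimate choice of) the principal component *)
Definition principal (X : 'I_n) : Prop :=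
  central X \/ ((forall Y, ~ central Y) /\ semicentral X).

Definition tail (Z : {set 'I_n}) : bool := kY Z == 1%N.

Definition small_tail (Xpr : 'I_n) (Z : {set 'I_n}) : bool :=
  tail Z && ((2 * genusY Z < genusC) || ((2 * genusY Z == genusC) && (Xpr \notin Z))).

(* multidegree of O_C(Z): -#(X ∩ Z') on X ⊆ Z, #(X ∩ Z) on X ⊆ Z' *)
Definition mdeg_OZ (Z : {set 'I_n}) : multideg := fun k =>
  if k \in Z then - (#|[set j | e k j & j \notin Z]|)%:Z
  else (#|[set j | e k j & j \in Z]|)%:Z.

Definition e1 (Xpr : 'I_n) : multideg := fun k => if k == Xpr then 1 else 0.

(* multidegree of alpha^1_C(q), q a smooth point of the component i *)
Definition mdeg_alpha_smooth (Xpr i : 'I_n) : multideg := fun k =>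
  (if k == i then 1 else 0) +
  \sum_(Z : {set 'I_n} | small_tail Xpr Z && (i \in Z)) mdeg_OZ Z k.

(* multidegree of alpha^1_C(q), q the node joining components a and b,
   Z0 the small tail at q *)
Definition mdeg_alpha_node (Xpr a b : 'I_n) (Z0 : {set 'I_n}) : multideg := fun k =>
  (if (k \in Z0) && ((k == a) || (k == b)) then 1 else 0) +
  \sum_(Z : {set 'I_n} | small_tail Xpr Z && ((a \in Z) || (b \in Z))) mdeg_OZ Z k.

End Curves.

(* Main.v *)
Require Import Defs.
From HB Require Import structures.
From mathcomp Require Import all_boot all_order all_algebra.
From Stdlib Require Import Lia.
Set Implicit Arguments. Unset Strict Implicit. Unset Printing Implicit Defensive.
Import Order.TTheory GRing.Theory Num.Theory.
Lemma conn_closed (T : finType) (r : rel T) (P : pred T) x y :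
  (forall a b, r a b -> P a -> P b) -> P x -> connect r x y -> P y.
Proof.
move=> cl Px /connectP [p pth ->]; elim: p x Px pth => //= z p IH x Px.
by case/andP=> rxz pth; apply: IH (cl _ _ rxz Px) pth.
Qed.

Lemma conn_restrict (T : finType) (r : rel T) (P : pred T) x y :
  (forall a b, r a b -> P a -> P b) -> P x -> connect r x y ->
  connect (fun a b => [&& r a b, P a & P b]) x y.
Proof.
move=> cl Px /connectP [p pth ->]; elim: p x Px pth => /= [|z p IH] x Px.
  by rewrite connect0.
case/andP=> rxz pth; apply: (connect_trans (y:=z)); last first.
  by apply: IH (cl _ _ rxz Px) pth.
by apply: connect1; rewrite rxz Px (cl _ _ rxz Px).
Qed.

Lemma card_pairs n (P : 'I_n -> 'I_n -> bool) :
  #|[set p : 'I_n * 'I_n | P p.1 p.2]| = (\sum_i \sum_j (P i j : nat))%N.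
Proof.
rewrite -sum1_card (eq_bigl (fun p => P p.1 p.2)); last by move=> p; rewrite inE.
rewrite -(pair_big_dep xpredT (fun i j => P i j) (fun _ _ => 1%N)).
by apply: eq_bigr => i _; rewrite big_mkcond /=; apply: eq_bigr => j _; case: (P i j).
Qed.

Section All.
Variables (n : nat) (e : rel 'I_n) (gen : 'I_n -> nat) (r : 'I_n).
Hypothesis esym : symmetric e.
Hypothesis eirr : irreflexive e.
Hypothesis econn : connectedb e setT.
Hypothesis ebridge : forall a b, e a b -> ~~ connect (remove_edge e a b) a b.
Hypothesis Hst : stable e gen.
Hypothesis Hg : (2 <= genusC e gen)%R.
Hypothesis Hpr : principal e gen r.

Definition L (Z : {set 'I_n}) :=
  [set p : 'I_n * 'I_n | [&& e p.1 p.2, p.1 \in Z & p.2 \notin Z]].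

Definition S a b : {set 'I_n} := locked [set u | connect (remove_edge e a b) a u].

Lemma inS a b u : (u \in S a b) = connect (remove_edge e a b) a u.
Proof. by rewrite /S -lock inE. Qed.

Lemma closedV (Z : {set 'I_n}) x0 :
  (forall x y, e x y -> x \in Z -> y \in Z) -> x0 \in Z -> forall y, y \in Z.
Proof.
move=> cl x0Z y.
move: econn => /forallP/(_ x0)/implyP/(_ (in_setT _))/forallP/(_ y)/implyP/(_ (in_setT _)).
apply: conn_closed x0Z => a b /and3P [eab _ _]; exact: cl.
Qed.

Lemma closedN (Z : {set 'I_n}) x0 y :
  (forall x y, e x y -> x \in Z -> y \in Z) -> y \notin Z -> x0 \notin Z.
Proof. by move=> cl yZ; apply/negP => x0Z; rewrite (closedV cl x0Z) in yZ. Qed.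

Lemma S_a a b : a \in S a b.
Proof. by rewrite inS connect0. Qed.

Lemma S_b a b : e a b -> b \notin S a b.
Proof. by move=> eab; rewrite inS ebridge. Qed.

Lemma S_closed a b x y : x \in S a b -> e x y ->
  ~~ (((x == a) && (y == b)) || ((x == b) && (y == a))) -> y \in S a b.
Proof.
rewrite !inS => cx exy H; apply: connect_trans cx _; apply: connect1.
by rewrite /remove_edge exy H.
Qed.

Lemma S_leave a b x y : x \in S a b -> e x y -> y \notin S a b -> (x = a) /\ (y = b).
Proof.
move=> xS exy yS.
have : ((x == a) && (y == b)) || ((x == b) && (y == a)).
  by apply: contraR yS => H; apply: S_closed xS exy H.
case/orP=> /andP [/eqP xa /eqP yb] //.
have eab : e a b by rewrite esym -xa -yb.
by move: xS; rewrite xa (negbTE (S_b eab)).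
Qed.

Lemma S_min a b (Z : {set 'I_n}) : a \in Z ->
  (forall x y, x \in Z -> e x y -> y \notin Z -> (x = a) /\ (y = b)) ->
  {subset S a b <= Z}.
Proof.
move=> aZ H u; rewrite inS; apply: conn_closed aZ => x y.
rewrite /remove_edge => /andP [exy nab] xZ; apply: contraTT nab => yZ.
by have [-> ->] := H x y xZ exy yZ; rewrite !eqxx.
Qed.

Lemma S_eq a b (Z : {set 'I_n}) : e a b -> a \in Z -> b \notin Z ->
  (forall x y, x \in Z -> e x y -> y \notin Z -> (x = a) /\ (y = b)) ->
  Z = S a b.
Proof.
move=> eab aZ bZ H; apply/setP => u; apply/idP/idP; last exact: S_min.
move=> uZ.
pose U := S a b :|: ~: Z.
have cl : forall x y, e x y -> x \in U -> y \in U.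
  move=> x y exy; rewrite !in_setU !in_setC; case/orP => [xS|xZ].
    case yS: (y \in S a b) => //=.
    have [_ ->] := S_leave xS exy (negbT yS); by [].
  case yZ: (y \in Z) => //=; rewrite ?orbF ?orbT //.
  have eyx : e y x by rewrite esym.
  have [-> _] := H y x yZ eyx xZ; exact: S_a.
have aU : a \in U by rewrite in_setU S_a.
have := @closedV U a cl aU u.
by rewrite in_setU in_setC uZ orbF.
Qed.

Lemma S_compl a b : e a b -> ~: S a b = S b a.
Proof.
move=> eab; apply: S_eq; first by rewrite esym.
- by rewrite in_setC S_b.
- by rewrite in_setC negbK S_a.
move=> x y; rewrite !in_setC negbK => xS exy yS.
have eyx : e y x by rewrite esym.
have [-> ->] := S_leave yS eyx xS; by [].
Qed.

Lemma S_L a b : e a b -> L (S a b) = [set (a, b)].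
Proof.
move=> eab; apply/setP => [[x y]]; rewrite !inE /=.
apply/idP/idP.
  case/and3P => exy xS yS; have [-> ->] := S_leave xS exy yS; by [].
by case/eqP => -> ->; rewrite eab S_a S_b.
Qed.

Lemma S_kY a b : e a b -> kY e (S a b) = 1%N.
Proof. by move=> eab; rewrite /kY -/(L _) S_L // cards1. Qed.

Lemma tailE (Z : {set 'I_n}) : kY e Z = 1%N ->
  exists a b, [/\ e a b, L Z = [set (a, b)] & Z = S a b].
Proof.
rewrite /kY -/(L Z) => /eqP /cards1P [[a b] LZ].
have : (a, b) \in L Z by rewrite LZ set11.
rewrite inE /= => /and3P [eab aZ bZ].
exists a, b; split => //; apply: S_eq => // x y xZ exy yZ.
have : (x, y) \in L Z by rewrite inE /= exy xZ yZ.
by rewrite LZ inE => /eqP [-> ->].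
Qed.

Lemma neighbor_in_compl u c : e u c -> forall c', e u c' -> c' != c -> c' \in S u c.
Proof.
move=> euc c' euc' neq; apply: S_closed (S_a _ _) euc' _.
rewrite eqxx /= (negbTE neq) /=; apply/negP => /andP [/eqP uc _].
by move: euc; rewrite uc eirr.
Qed.

Lemma S_disj u c c' : e c u -> e c' u -> c != c' ->
  forall x, x \in S c u -> x \notin S c' u.
Proof.
move=> ecu ecu' neq x xS; apply/negP => xS'.
pose W := S c' u :&: S c u.
have cl : forall x y, e x y -> x \in W -> y \in W.
  move=> a b eab; rewrite in_setI => /andP [aS' aS].
  have bS' : b \in S c' u.
    case bS': (b \in S c' u) => //.
    have [ac' _] := S_leave aS' eab (negbT bS').
    have : c' \in S u c by apply: neighbor_in_compl; rewrite 1?esym // eq_sym.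
    by rewrite -S_compl // in_setC -ac' aS.
  rewrite in_setI bS' /=.
  case bS: (b \in S c u) => //.
  have [_ bu] := S_leave aS eab (negbT bS).
  by move: bS'; rewrite bu (negbTE (S_b ecu')).
have xW : x \in W by rewrite in_setI xS xS'.
have := @closedV W x cl xW u.
by rewrite in_setI (negbTE (S_b ecu')).
Qed.

Lemma S_cover u x : x != u -> exists2 c, e u c & x \in S c u.
Proof.
move=> xu.
pose U := u |: [set y | [exists c, e u c && (y \in S c u)]].
have cl : forall x y, e x y -> x \in U -> y \in U.
  move=> a b eab; rewrite !inE => /orP [/eqP au|].
    apply/orP; right; apply/existsP; exists b; rewrite -au eab; exact: S_a.
  case/existsP => c /andP [euc aS].
  case bS: (b \in S c u); first by apply/orP; right; apply/existsP; exists c; rewrite euc bS.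
  have [_ ->] := S_leave aS eab (negbT bS); by rewrite eqxx.
have uU : u \in U by rewrite !inE eqxx.
have := @closedV U u cl uU x.
rewrite !inE (negbTE xu) /= => /existsP [c /andP [euc xS]]; by exists c.
Qed.

Lemma S_cover_uniq u x c c' : e u c -> e u c' -> x \in S c u -> x \in S c' u -> c = c'.
Proof.
move=> euc euc' xS xS'; apply/eqP; apply: contraTT xS' => neq.
by apply: (S_disj (c:=c)) => //; rewrite esym.
Qed.

Definition deg v := #|[set j | e v j]|.

Lemma deg_sum v : deg v = (\sum_j (e v j : nat))%N.
Proof.
rewrite /deg -sum1_card big_mkcond; apply: eq_bigr => j _; rewrite inE.
by case: (e v j).
Qed.

Lemma sum_deg (Y : {set 'I_n}) :
  (\sum_(v in Y) deg v = 2 * nedges_in e Y + kY e Y)%N.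
Proof.
rewrite /nedges_in /kY.
rewrite (card_pairs (fun i j => [&& (val i < val j)%N, e i j, i \in Y & j \in Y])).
rewrite (card_pairs (fun i j => [&& e i j, i \in Y & j \notin Y])).
have -> : \sum_(v in Y) deg v =
   (\sum_i \sum_j (((val i < val j)%N && [&& e i j, i \in Y & j \in Y]) +
                  ((val j < val i)%N && [&& e i j, i \in Y & j \in Y]) +
                  [&& e i j, i \in Y & j \notin Y] : nat))%N.
  rewrite big_mkcond /=; apply: eq_bigr => i _.
  rewrite deg_sum.
  case iY: (i \in Y) => /=; last first.
    by rewrite big1 // => j _; rewrite !andbF.
  apply: eq_bigr => j _.
  case eij: (e i j) => /=; last by rewrite !andbF.
  case: (ltngtP (val i) (val j)) => //= hij.
  - by case: (j \in Y).
  - by case: (j \in Y).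
  - by have ij := val_inj hij; move: eij; rewrite ij eirr.
under eq_bigr => i _ do rewrite !big_split /=.
rewrite !big_split /= mul2n -addnn; congr (_ + _ + _)%N.
rewrite exchange_big; apply: eq_bigr => i _; apply: eq_bigr => j _.
by rewrite esym; case: (i \in Y); case: (j \in Y); rewrite ?andbF ?andbT.
Qed.

Definition wn v := (2 * gen v + deg v - 2)%N.
Definition hn (Y : {set 'I_n}) := (\sum_(v in Y) wn v)%N.

Lemma wn_ge v : (2 <= 2 * gen v + deg v)%N.
Proof.
case g0: (gen v) => [|k]; last by rewrite mulnS leq_addr.
by rewrite muln0 add0n; apply: leq_trans (Hst g0).
Qed.

Lemma hn_eq (Y : {set 'I_n}) :
  (hn Y + 2 * #|Y| = 2 * \sum_(v in Y) gen v + 2 * nedges_in e Y + kY e Y)%N.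
Proof.
rewrite -addnA -sum_deg big_distrr /= -big_split /= mulnC -sum_nat_const /hn -big_split /=.
by apply: eq_bigr => v _; rewrite /wn subnK // wn_ge.
Qed.

Section Ring.
Local Open Scope ring_scope.

Lemma degomega_hn (Y : {set 'I_n}) : degomega e gen Y = (hn Y)%:Z.
Proof.
have H := hn_eq Y.
have H' : (hn Y)%:Z = (2 * \sum_(v in Y) gen v + 2 * nedges_in e Y + kY e Y)%N%:Z - (2 * #|Y|)%N%:Z.
  by rewrite -H PoszD addrK.
rewrite H' /degomega /genusY.
have -> : \sum_(i in Y) (gen i)%:Z = (\sum_(i in Y) gen i)%N%:Z.
  by rewrite -natz natr_sum; apply: eq_bigr => i _; rewrite natz.
rewrite PoszD PoszD PoszM PoszM PoszM.
set G := Posz (\sum_(i in Y) gen i). set C := Posz #|Y|. set E := Posz (nedges_in e Y).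
set K := Posz (kY e Y).
rewrite mulrDr mulr1 addrK !mulrDr mulrN.
by rewrite (addrAC (2 * G)) (addrAC _ (- _)).
Qed.


Ltac nlia := rewrite -?plusE -?minusE -?multE; intros; lia.

Lemma int_nat2 (x : int) (a : nat) : 2 * x = a%:Z -> exists xn : nat, x = xn%:Z /\ (2 * xn = a)%N.
Proof.
case: x => [xn | m] H.
  by exists xn; split => //; move: H; rewrite -PoszM => -[].
have : 2 * Negz m < 0 by rewrite pmulr_rlt0.
by rewrite H.
Qed.

Notation HV := (hn setT).

Lemma kY_T : kY e setT = 0%N.
Proof.
rewrite /kY; apply/eqP; rewrite cards_eq0; apply/eqP/setP => p.
by rewrite !inE andbF.
Qed.

Lemma aux0 (x : int) (a : nat) : x - 2 + 0%:Z = a%:Z -> x = (a + 2)%N%:Z.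
Proof. by move=> H; rewrite PoszD -H addr0 subrK. Qed.
Lemma aux1 (x : int) (a : nat) : x - 2 + 1%:Z = a%:Z -> x = (a + 1)%N%:Z.
Proof. move=> H; rewrite PoszD -H -addrA. have -> : (Posz 1 + Posz 1) = 2 by []. by rewrite subrK. Qed.

Lemma gC_nat : exists gn : nat, genusC e gen = gn%:Z /\ (2 * gn = HV + 2)%N.
Proof.
apply: int_nat2.
have := degomega_hn setT; rewrite /degomega kY_T => /aux0 H.
by rewrite /genusC H.
Qed.

Lemma gY_tail Z : kY e Z = 1%N ->
  exists zn : nat, genusY e gen Z = zn%:Z /\ (2 * zn = hn Z + 1)%N.
Proof.
move=> kZ; apply: int_nat2.
by have := degomega_hn Z; rewrite /degomega kZ => /aux1 ->.
Qed.

Lemma HV_ge2 : (2 <= HV)%N.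
Proof.
have [gn [gE hg]] := gC_nat.
move: Hg; rewrite gE lez_nat => /ssrnat.leP H1; apply/ssrnat.leP; move: H1 hg; nlia.
Qed.

Lemma conn_comp c : e r c -> conn_component_of e (~: [set r]) (S c r).
Proof.
move=> erc; have ecr : e c r by rewrite esym.
apply/and4P; split.
- apply/subsetP => x xS; rewrite !inE; apply/eqP => xr.
  by move: xS; rewrite xr (negbTE (S_b ecr)).
- by apply/set0Pn; exists c; exact: S_a.
- apply/forallP => i; apply/implyP => iS; apply/forallP => j; apply/implyP => jS.
  have cx : forall x, x \in S c r -> connect (induced e (S c r)) c x.
    move=> x; rewrite inS => cx.
    have cl : forall a b, remove_edge e c r a b -> a \in S c r -> b \in S c r.
      move=> a b rab aS; rewrite inS in aS *.
      rewrite inS; exact: (connect_trans aS (connect1 rab)).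
    have H2 := @conn_restrict _ (remove_edge e c r) (fun y => y \in S c r) c x cl (S_a c r) cx.
    have HS : subrel (fun a b => [&& remove_edge e c r a b, a \in S c r & b \in S c r])
                     (connect (induced e (S c r))).
      move=> a b /and3P [rab aS bS]; apply: connect1.
      by move: rab => /andP [eab _]; rewrite /induced eab aS bS.
    exact: (connect_sub HS H2).
  have symI : connect_sym (induced e (S c r)).
    apply: sym_connect_sym => a b; rewrite /induced esym.
    by case: (a \in S c r); case: (b \in S c r); rewrite ?andbF ?andbT.
  apply: connect_trans (cx j jS); rewrite symI; exact: cx.
- apply/forallP => i; apply/implyP => iS; apply/forallP => j; apply/implyP.
  rewrite !inE => /andP [jnS jnr]; apply/negP => eij.
  have [_ jr] := S_leave iS eij jnS.
  by move: jnr; rewrite jr eqxx.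
Qed.
Lemma comp_bound c : e r c -> (2 * hn (S c r) <= HV)%N.
Proof.
move=> erc; have cc := conn_comp erc.
have Hle : 2 * genusY e gen (S c r) <= genusC e gen.
  case: Hpr => [Hc | [_ Hsc]]; [exact: ltW (Hc _ cc) | exact: Hsc _ cc].
have ecr : e c r by rewrite esym.
have [zn [zE hz]] := gY_tail (S_kY ecr).
have [gn [gE hg]] := gC_nat.
move: Hle; rewrite zE gE -PoszM lez_nat => /ssrnat.leP H1; apply/ssrnat.leP.
move: H1 hz hg; nlia.
Qed.

Lemma hn_sub (Y Z : {set 'I_n}) : {subset Y <= Z} -> (hn Y <= hn Z)%N.
Proof.
move=> sub; rewrite /hn [X in (X <= _)%N]big_mkcond [X in (_ <= X)%N]big_mkcond.
apply: leq_sum => i _; case iY: (i \in Y) => //.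
by rewrite (sub i iY).
Qed.

Lemma hn_compl (Y : {set 'I_n}) : (hn (~: Y) + hn Y = HV)%N.
Proof.
rewrite /hn [in RHS](bigID (fun v => v \in Y)) /= addnC; congr (_ + _)%N.
  by apply: eq_bigl => v; rewrite !inE.
by apply: eq_bigl => v; rewrite !inE.
Qed.

Lemma tail_sub Z : kY e Z = 1%N -> r \notin Z -> exists2 c, e r c & {subset Z <= S c r}.
Proof.
move=> kZ rZ; have [a [b [eab LZ ZE]]] := tailE kZ.
have aZ : a \in Z by rewrite ZE S_a.
have ar : a != r by apply: contraNneq rZ => <-.
have [c erc aS] := S_cover ar.
exists c => // u uZ; apply/negPn/negP => uS.
pose U := Z :&: ~: S c r.
have cl : forall x y, e x y -> x \in U -> y \in U.
  move=> x y exy; rewrite !in_setI !in_setC => /andP [xZ xS].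
  apply/andP; split.
    case yZ: (y \in Z) => //.
    have : (x, y) \in L Z by rewrite inE /= exy xZ yZ.
    rewrite LZ inE => /eqP [xa _]; by move: xS; rewrite xa aS.
  apply/negP => yS.
  have eyx : e y x by rewrite esym.
  have [_ xr] := S_leave yS eyx xS.
  by move: rZ; rewrite -xr xZ.
have uU : u \in U by rewrite in_setI in_setC uZ uS.
have := @closedV U u cl uU r.
by rewrite in_setI (negbTE rZ).
Qed.

Lemma TB Z : kY e Z = 1%N -> r \notin Z -> (2 * hn Z <= HV)%N.
Proof.
move=> kZ rZ; have [c erc sub] := tail_sub kZ rZ.
apply: leq_trans (comp_bound erc); rewrite leq_mul2l; apply/orP; right.
exact: hn_sub.
Qed.

Lemma kY_compl_tail Z : kY e Z = 1%N -> kY e (~: Z) = 1%N.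
Proof.
move=> kZ; have [a [b [eab LZ ZE]]] := tailE kZ.
by rewrite ZE S_compl // S_kY // esym.
Qed.

Lemma kY_pos (Y : {set 'I_n}) : Y != set0 -> Y != setT -> (0 < kY e Y)%N.
Proof.
move=> /set0Pn [x xY] YT; rewrite lt0n; apply/negP => /eqP k0.
have cl : forall a b, e a b -> a \in Y -> b \in Y.
  move=> a b eab aY; apply/negPn/negP => bY.
  have : (a, b) \in L Y by rewrite inE /= eab aY bY.
  by rewrite /L; move/card0_eq: k0 => ->.
move: YT; apply/negP/negPn/eqP/setP => y; rewrite in_setT.
exact: (@closedV Y x cl xY y).
Qed.

Lemma small_iff Z : small_tail e gen r Z = (kY e Z == 1%N) && (r \notin Z).
Proof.
rewrite /small_tail /tail; case kZ: (kY e Z == 1%N) => //=; move/eqP: kZ => kZ.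
have [zn [zE hz]] := gY_tail kZ.
have [gn [gE hg]] := gC_nat.
rewrite zE gE -PoszM ltz_nat eqz_nat.
case rZ: (r \in Z) => /=.
  rewrite andbF orbF.
  have kZ' := kY_compl_tail kZ.
  have := TB kZ'; rewrite inE rZ => /(_ isT) H1.
  have H2 := hn_compl Z.
  apply/negP => /ssrnat.leP H3.
  move/ssrnat.leP: H1 => H1; move: H1 H2 H3 hz hg; nlia.
rewrite andbT orbC -leq_eqVlt.
have := TB kZ; rewrite rZ => /(_ isT) /ssrnat.leP H1; apply/ssrnat.leP.
move: H1 hz hg; nlia.
Qed.
Definition cc (Y : {set 'I_n}) : rat := (hn Y)%:R / HV%:R.

Lemma HVpos : (0 : rat) < HV%:R.
Proof. by rewrite ltr0n; apply: leq_trans HV_ge2. Qed.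

Lemma cc_ge0 Y : 0 <= cc Y.
Proof. by rewrite /cc divr_ge0 // ler0n. Qed.

Lemma cc_le1 Y : cc Y <= 1.
Proof.
rewrite /cc ler_pdivrMr ?HVpos // mul1r ler_nat.
by apply: hn_sub => x _; rewrite in_setT.
Qed.

Lemma cc_compl Y : cc (~: Y) = 1 - cc Y.
Proof.
have H : hn (~: Y) = (HV - hn Y)%N by rewrite -(hn_compl Y) addnK.
have Hle : (hn Y <= HV)%N by rewrite -(hn_compl Y) leq_addl.
have HV0 : (HV%:R : rat) != 0 by rewrite gt_eqF ?HVpos.
by rewrite /cc H natrB // mulrBl divff.
Qed.

Lemma cc_tail Z : kY e Z = 1%N -> r \notin Z -> 2 * cc Z <= 1.
Proof.
move=> kZ rZ; rewrite /cc mulrA ler_pdivrMr ?HVpos // mul1r -natrM ler_nat.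
exact: TB.
Qed.

Lemma bound_half Z (k : nat) : (0 < k)%N -> (k = 1%N -> 2 * cc Z <= 1) ->
  cc Z <= k%:R / 2.
Proof.
move=> kpos H; case: (ltngtP k 1) => [|k1|k1].
- by rewrite ltnS leqn0 => /eqP k0; rewrite k0 in kpos.
- apply: le_trans (cc_le1 Z) _; rewrite ler_pdivlMr // mul1r ler_nat.
  exact: k1.
- by rewrite k1 ler_pdivlMr // mulrC; apply: H.
Qed.

Lemma expr_eq (d : multideg n) Y : totdeg d = 1 ->
  (degY d Y)%:~R - slope e gen d * (degomega e gen Y)%:~R = (degY d Y)%:~R - cc Y :> rat.
Proof.
move=> Ht; rewrite /slope Ht degomega_hn.
have [gn [gE hg]] := gC_nat.
have -> : 2 * genusC e gen - 2 = HV%:Z.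
  by rewrite gE -PoszM hg PoszD addrK.
by rewrite /cc mul1r mulrC.
Qed.

Lemma degY_e1 Y : degY (e1 r) Y = (if r \in Y then 1 else 0).
Proof.
rewrite /degY /e1; case rY: (r \in Y).
  rewrite (bigD1 r) //= eqxx big1 ?addr0 // => i /andP [_ /negbTE ->] //.
apply: big1 => i iY; case: eqP => // ir; by move: iY; rewrite ir rY.
Qed.

Lemma totdeg_e1 : totdeg (e1 r) = 1.
Proof. by rewrite /totdeg degY_e1 in_setT. Qed.

Lemma ss_e1 : semistable e gen (e1 r).
Proof.
move=> Y Y0 YT; rewrite expr_eq ?totdeg_e1 // degY_e1.
have kpos := kY_pos Y0 YT.
have -> : ((kY e Y)%:~R : rat) = (kY e Y)%:R by [].
case rY: (r \in Y).
  have -> : ((Posz 1)%:~R : rat) = 1 by [].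
  rewrite -cc_compl ger0_norm ?cc_ge0 //.
  change (cc (~: Y) <= (kY e Y)%:R / 2 :> rat).
  refine (bound_half kpos _); move=> k1.
  have [a [b [eab LY YE]]] := tailE k1.
  apply: cc_tail; first exact: kY_compl_tail.
  by rewrite in_setC rY.
have -> : ((Posz 0)%:~R : rat) = 0 by [].
rewrite sub0r normrN ger0_norm ?cc_ge0 //.
change (cc Y <= (kY e Y)%:R / 2 :> rat).
refine (bound_half kpos _); move=> k1.
by apply: cc_tail => //; rewrite rY.
Qed.

Lemma qs_e1 (Y : {set 'I_n}) : r \in Y -> Y != setT ->
  (degY (e1 r) Y)%:~R - slope e gen (e1 r) * (degomega e gen Y)%:~R > - ((kY e Y)%:~R / 2) :> rat.
Proof.
move=> rY YT; rewrite expr_eq ?totdeg_e1 // degY_e1 rY.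
have Y0 : Y != set0 by apply/set0Pn; exists r.
have kpos := kY_pos Y0 YT.
have -> : ((Posz 1)%:~R : rat) = 1 by [].
rewrite -cc_compl; apply: lt_le_trans (cc_ge0 _).
by rewrite oppr_lt0 divr_gt0 // ltr0n.
Qed.

Lemma degY_compl (d : multideg n) (Z : {set 'I_n}) : degY d (~: Z) = totdeg d - degY d Z.
Proof.
apply/eqP; rewrite eq_sym subr_eq; apply/eqP.
rewrite /totdeg /degY [in LHS](bigID (fun v => v \in Z)) /= addrC; congr (_ + _).
  by apply: eq_bigl => v; rewrite !inE.
by apply: eq_bigl => v; rewrite !inE.
Qed.
Lemma sum_decomp u (F : 'I_n -> int) :
  \sum_x F x = F u + \sum_(c | e u c) \sum_(x in S c u) F x.
Proof.
rewrite (bigD1 u) //=; congr (_ + _).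
rewrite [RHS](eq_bigr (fun c => \sum_x (if x \in S c u then F x else 0))); last first.
  by move=> c _; rewrite big_mkcond.
rewrite exchange_big /= [LHS]big_mkcond /=; apply: eq_bigr => x _.
case: (eqVneq x u) => [->|xu] /=.
  rewrite big1 // => c euc.
  have ecu : e c u by rewrite esym.
  by rewrite (negbTE (S_b ecu)).
have [c0 euc0 xS] := S_cover xu.
rewrite (bigD1 c0) //= xS big1 ?addr0 // => c /andP [euc cne].
rewrite (negbTE (@S_disj u c0 c _ _ _ x xS)) //; rewrite 1?esym //.
by rewrite eq_sym.
Qed.

Lemma tail_zero (d : multideg n) : totdeg d = 1 -> quasistable e gen r d ->
  forall Z, kY e Z = 1%N -> r \notin Z -> degY d Z = 0.
Proof.
move=> Ht [Hss Hq] Z kZ rZ.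
have [a [b [eab LZ ZE]]] := tailE kZ.
have aZ : a \in Z by rewrite ZE S_a.
have Z0 : Z != set0 by apply/set0Pn; exists a.
have ZT : Z != setT by apply/negP => /eqP ZT; move: rZ; rewrite ZT in_setT.
have h1 := Hss Z Z0 ZT.
rewrite expr_eq // kZ in h1.
have rZ' : r \in ~: Z by rewrite in_setC.
have ZT' : ~: Z != setT.
  apply/negP => /eqP ZT'; move: aZ; rewrite -[Z]setCK ZT' in_setC in_setT //.
have h2 := Hq _ rZ' ZT'.
rewrite expr_eq // kY_compl_tail // degY_compl Ht cc_compl intrB in h2.
have hc := cc_tail kZ rZ.
have hc0 := cc_ge0 Z.
set x := ((degY d Z)%:~R : rat) in h1 h2.
set c := cc Z in h1 h2 hc hc0.
have E1 : ((Posz 1)%:~R : rat) = 1 by [].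
rewrite E1 in h1 h2.
have hc2 : c <= 1 / 2 by rewrite ler_pdivlMr // mulrC.
have half1 : (1 / 2 : rat) < 1 by rewrite ltr_pdivrMr // mul1r ltr1n.
move: h1; rewrite ler_norml => /andP [h1a _].
rewrite opprB addrC addrA subrK ltrBrDr addrC ltrBlDr in h2.
have {}h2 : x < c + 1 / 2 := h2.
have {}h1a : - (1 / 2) <= x - c := h1a.
have xlt1 : x < 1.
  apply: lt_le_trans h2 _; rewrite [X in _ <= X](splitr 1) lerD2r.
  exact: hc2.
have xgt : -1 < x.
  rewrite lerBrDr in h1a; apply: lt_le_trans h1a.
  apply: (@lt_le_trans _ _ (- (1 / 2))); first by rewrite ltrN2.
  by rewrite lerDl.
have xlt1' : degY d Z < 1 by rewrite -(ltr_int rat).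
have xgt' : -1 < degY d Z.
  by rewrite -(ltr_int rat) intrN.
apply/eqP; rewrite eq_le; apply/andP; split.
  by rewrite -ltzD1.
by rewrite -lezD1 in xgt'.
Qed.

Lemma uniq_d (d : multideg n) : totdeg d = 1 -> quasistable e gen r d -> d =1 e1 r.
Proof.
move=> Ht Hq.
have dz : forall u, u != r -> d u = 0.
  move=> u ur.
  have := sum_decomp u d; rewrite -/(degY d setT).
  have -> : \sum_x d x = totdeg d.
    by rewrite /totdeg /degY; apply: eq_bigl => x; rewrite in_setT.
  have ru : r != u by rewrite eq_sym.
  have [p eup rS] := S_cover ru.
  have -> : \sum_(c | e u c) \sum_(x in S c u) d x = \sum_(c | e u c) degY d (S c u) by [].
  rewrite (bigD1 p) //= [X in _ + (_ + X)]big1; last first.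
    move=> c /andP [euc cp].
    have ecu : e c u by rewrite esym.
    have epu : e p u by rewrite esym.
    apply: tail_zero => //; first exact: S_kY.
    by apply: (@S_disj u p c) => //; rewrite eq_sym.
  have epu : e p u by rewrite esym.
  have hp : degY d (S p u) = 1.
    have := degY_compl d (S u p); rewrite S_compl // Ht => ->.
    rewrite tail_zero ?subr0 //; first exact: S_kY.
    by rewrite -in_setC S_compl.
  rewrite Ht hp addr0 => /eqP; rewrite -{1}[1]add0r eq_sym (inj_eq (addIr _)) => /eqP.
  done.
move=> k; rewrite /e1; case: eqVneq => [->|kr]; last exact: dz.
move: Ht; rewrite /totdeg /degY (bigD1 r) ?in_setT //= big1 ?addr0 //.
by move=> x /andP [_ xr]; exact: dz.
Qed.
Lemma card_sub1 (T : finType) (X : {set T}) x0 :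
  (forall x, x \in X -> x = x0) -> #|X| = (x0 \in X).
Proof.
move=> H; case x0X: (x0 \in X).
  have -> : X = [set x0] by apply/setP => x; rewrite inE; apply/idP/eqP => [/H //| ->].
  by rewrite cards1.
apply/eqP; rewrite cards_eq0; apply/eqP/setP => x; rewrite inE.
by apply/negbTE/negP => xX; move: x0X; rewrite -(H x xX) xX.
Qed.

Lemma mdeg_S a b k : e a b ->
  mdeg_OZ e (S a b) k = ((k == b) : nat)%:Z - ((k == a) : nat)%:Z.
Proof.
move=> eab; rewrite /mdeg_OZ; case kS: (k \in S a b).
  have kb : (k == b) = false.
    by apply/negbTE; apply: contraTneq kS => ->; rewrite (S_b eab).
  rewrite kb sub0r; congr (- _); congr Posz.
  rewrite (@card_sub1 _ _ b); last first.
    by move=> j; rewrite inE => /andP [ekj jS]; have [_ ->] := S_leave kS ekj jS.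
  rewrite inE (S_b eab) andbT.
  case: (eqVneq k a) => [->|ka]; first by rewrite eab.
  case ekb: (e k b) => //.
  have [] := S_leave kS ekb (S_b eab).
  by move=> /eqP; rewrite (negbTE ka).
have ka : (k == a) = false.
  by apply/negbTE; apply: contraFneq kS => ->; rewrite S_a.
rewrite ka subr0; congr Posz.
rewrite (@card_sub1 _ _ a); last first.
  move=> j; rewrite inE => /andP [ekj jS].
  have ejk : e j k by rewrite esym.
  by have [-> _] := S_leave jS ejk (negbT kS).
rewrite inE S_a andbT.
case: (eqVneq k b) => [->|kb]; first by rewrite esym eab.
case eka: (e k a) => //.
have eak : e a k by rewrite esym.
have [_ /eqP] := S_leave (S_a a b) eak (negbT kS).
by rewrite (negbTE kb).
Qed.

Lemma sum_ind (T : finType) (P Q : pred T) :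
  \sum_(p | P p) ((Q p : nat)%:Z) = (#|[set p | P p && Q p]|)%:Z.
Proof.
have -> : #|[set p | P p && Q p]| = (\sum_(p | P p) (Q p : nat))%N.
  rewrite -sum1_card (eq_bigl (fun p => P p && Q p)); last by move=> p; rewrite inE.
  by rewrite big_mkcondr /=; apply: eq_bigr => p _; case: (Q p).
by rewrite (big_morph Posz PoszD (erefl (Posz 0))).
Qed.

Lemma pairs_sum i k :
  \sum_(Z | (kY e Z == 1%N) && (r \notin Z) && (i \in Z)) mdeg_OZ e Z k =
  \sum_(p : 'I_n * 'I_n | [&& e p.1 p.2, r \notin S p.1 p.2 & i \in S p.1 p.2])
     (((k == p.2) : nat)%:Z - ((k == p.1) : nat)%:Z).
Proof.
set G := fun p : 'I_n * 'I_n => (((k == p.2) : nat)%:Z - ((k == p.1) : nat)%:Z).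
set P := fun Z : {set 'I_n} => (kY e Z == 1%N) && (r \notin Z) && (i \in Z).
rewrite (eq_bigr (fun Z => \sum_(p in L Z) G p)); last first.
  move=> Z /andP [/andP [/eqP kZ _] _].
  have [a [b [eab LZ ZE]]] := tailE kZ.
  by rewrite LZ big_set1 ZE mdeg_S.
rewrite (exchange_big_dep (fun p : 'I_n * 'I_n => e p.1 p.2)) /=; last first.
  by move=> Z p _; rewrite inE => /and3P [].
rewrite [RHS]big_mkcondr /=; apply: eq_bigr => [[a b]] /= eab.
case hQ: ((r \notin S a b) && (i \in S a b)).
  rewrite (big_pred1 (S a b)) // => Z /=.
  apply/idP/eqP.
    case/andP => /andP [/andP [/eqP kZ _] _] pL.
    have [x [y [exy LZ ZE]]] := tailE kZ.
    by move: pL; rewrite LZ inE => /eqP [-> ->].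
  move=> ->; rewrite /P S_kY // eqxx /=; move/andP: hQ => [-> ->] /=.
  by rewrite S_L // set11.
rewrite big_pred0 // => Z /=; apply/negbTE/negP.
case/andP => /andP [/andP [/eqP kZ rZ] iZ] pL.
have [x [y [exy LZ ZE]]] := tailE kZ.
move: pL; rewrite LZ inE => /eqP [xa yb].
by move: hQ; rewrite xa yb -ZE rZ iZ.
Qed.
Lemma smooth_eq i k : mdeg_alpha_smooth e gen r i k = e1 r k.
Proof.
rewrite /mdeg_alpha_smooth.
rewrite (eq_bigl (fun Z => (kY e Z == 1%N) && (r \notin Z) && (i \in Z))); last first.
  by move=> Z; rewrite small_iff.
rewrite pairs_sum sumrB !sum_ind.
set A := [set p | _ && (k == p.2)].
set B := [set p | _ && (k == p.1)].
rewrite /e1.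
case: (eqVneq k i) => [ki0|ki].
  have A0 : #|A| = 0%N.
    apply/eqP; rewrite cards_eq0; apply/eqP/setP => -[a b]; rewrite !inE /=.
    apply/negbTE/negP => /andP [/and3P [eab _ iS] /eqP ib].
    by move: iS; rewrite -ki0 ib (negbTE (S_b eab)).
  rewrite A0.
  case: (eqVneq i r) => [ir|ir].
    have B0 : #|B| = 0%N.
      apply/eqP; rewrite cards_eq0; apply/eqP/setP => -[a b]; rewrite !inE /=.
      apply/negbTE/negP => /andP [/and3P [eab rS _] /eqP ia].
      by move: rS; rewrite -ia ki0 ir S_a.
    by rewrite B0 ki0 ir eqxx.
  have ri : r != i by rewrite eq_sym.
  have [c0 eic0 rS] := S_cover ri.
  have ec0i : e c0 i by rewrite esym.
  have B1 : #|B| = 1%N.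
    rewrite (@card_sub1 _ _ (i, c0)).
      by rewrite !inE /= eic0 ki0 eqxx andbT S_a /= -in_setC S_compl // rS.
    move=> -[a c]; rewrite !inE /= => /andP [/and3P [eac rS' _] /eqP ia].
    rewrite -ia ki0 in eac rS' *.
    have eci : e c i by rewrite esym.
    rewrite -in_setC S_compl // in rS'.
    by rewrite (S_cover_uniq eac eic0 rS' rS).
  by rewrite B1 ki0 (negbTE ir).
have ik : i != k by rewrite eq_sym.
have [c0 ekc0 iS] := S_cover ik.
have ec0k : e c0 k by rewrite esym.
have HA : #|A| = (r \notin S c0 k).
  rewrite (@card_sub1 _ _ (c0, k)).
    by rewrite !inE /= ec0k iS eqxx !andbT.
  move=> -[a b]; rewrite !inE /= => /andP [/and3P [eab _ iS'] /eqP kb].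
  rewrite -kb in eab iS' *.
  have eka : e k a by rewrite esym.
  by rewrite (S_cover_uniq eka ekc0 iS' iS).
case: (eqVneq k r) => [kr|kr].
  have B0 : #|B| = 0%N.
    apply/eqP; rewrite cards_eq0; apply/eqP/setP => -[a b]; rewrite !inE /=.
    apply/negbTE/negP => /andP [/and3P [eab rS _] /eqP ka].
    by move: rS; rewrite -ka kr S_a.
  rewrite HA B0 kr (negbTE (S_b _)) // -kr //.
rewrite /= ?add0r.
have rk : r != k by rewrite eq_sym.
have [p0 ekp0 rS] := S_cover rk.
have ep0k : e p0 k by rewrite esym.
have HB : #|B| = (i \in S k p0).
  rewrite (@card_sub1 _ _ (k, p0)).
    by rewrite !inE /= ekp0 eqxx !andbT -in_setC S_compl // rS.
  move=> -[a c]; rewrite !inE /= => /andP [/and3P [eac rS' _] /eqP ka].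
  rewrite -ka in eac rS' *.
  have eck : e c k by rewrite esym.
  rewrite -in_setC S_compl // in rS'.
  by rewrite (S_cover_uniq eac ekp0 rS' rS).
have E : (r \notin S c0 k) = (i \in S k p0).
  rewrite -(S_compl ep0k) in_setC.
  case: (eqVneq c0 p0) => [cp|cp]; first by rewrite cp rS -cp iS.
  have pc : p0 != c0 by rewrite eq_sym.
  by rewrite (S_disj ep0k ec0k pc rS) (S_disj ec0k ep0k cp iS).
by rewrite HA HB E subrr.
Qed.
Lemma node_eq q o Z0 k : e q o -> small_tail e gen r Z0 -> q \in Z0 -> o \notin Z0 ->
  mdeg_alpha_node e gen r q o Z0 k = e1 r k.
Proof.
move=> eqo sZ0 qZ0 oZ0.
have eoq : e o q by rewrite esym.
rewrite /mdeg_alpha_node -(smooth_eq q k) /mdeg_alpha_smooth.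
have -> : (k \in Z0) && ((k == q) || (k == o)) = (k == q).
  case: (eqVneq k q) => [->|kq]; first by rewrite qZ0.
  by case: (eqVneq k o) => [->|ko]; rewrite ?(negbTE oZ0) ?andbF.
congr (_ + _); apply: eq_bigl => Z.
case sZ: (small_tail e gen r Z) => //=.
case qZ: (q \in Z) => //=.
apply/negbTE/negP => oZ.
move: sZ; rewrite small_iff => /andP [/eqP kZ rZ].
move: sZ0; rewrite small_iff => /andP [/eqP kZ0 rZ0].
have [x [y [exy LZ ZE]]] := tailE kZ.
have : (o, q) \in L Z by rewrite inE /= eoq oZ qZ.
rewrite LZ inE => /eqP [ox qy].
have [x' [y' [exy' LZ0 Z0E]]] := tailE kZ0.
have : (q, o) \in L Z0 by rewrite inE /= eqo qZ0 oZ0.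
rewrite LZ0 inE => /eqP [qx' oy'].
move: rZ0; rewrite Z0E -qx' -oy' -in_setC S_compl // => rS.
by move: rZ; rewrite ZE -ox -qy rS.
Qed.

Lemma node_sym a b Z0 k :
  mdeg_alpha_node e gen r a b Z0 k = mdeg_alpha_node e gen r b a Z0 k.
Proof.
rewrite /mdeg_alpha_node orbC; congr (_ + _).
by apply: eq_bigl => Z; rewrite orbC.
Qed.

Lemma main_all :
  (totdeg (e1 r) = 1 /\ quasistable e gen r (e1 r) /\
   forall d : multideg n, totdeg d = 1 -> quasistable e gen r d -> d =1 e1 r)
  /\
  ((forall i : 'I_n, mdeg_alpha_smooth e gen r i =1 e1 r) /\
   (forall (a b : 'I_n) (Z0 : {set 'I_n}),
      e a b -> small_tail e gen r Z0 -> (a \in Z0) != (b \in Z0) ->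
      mdeg_alpha_node e gen r a b Z0 =1 e1 r)).
Proof.
split; first split; [exact: totdeg_e1 | split; [split; [exact: ss_e1 | exact: qs_e1] | exact: uniq_d]|].
split; first by move=> i k; exact: smooth_eq.
move=> a b Z0 eab sZ0 ne k.
case aZ: (a \in Z0) ne => ne.
  have bZ : b \notin Z0 by move: ne; case: (b \in Z0) => //=.
  by apply: node_eq.
have bZ : b \in Z0 by move: ne; case: (b \in Z0) => //=.
have eba : e b a by rewrite esym.
rewrite node_sym; apply: node_eq => //.
by rewrite aZ.
Qed.

End Ring.
End All.

Local Open Scope ring_scope.

Theorem mainTheorem2 (n : nat) (e : rel 'I_n) (gen : 'I_n -> nat)
  (Hsimple : simple_graph e) (Hct : compact_type e) (Hst : stable e gen)
  (Hg : 2 <= genusC e gen) (Xpr : 'I_n) (Hpr : principal e gen Xpr) :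
  (* (i) *)
  (totdeg (e1 Xpr) = 1 /\ quasistable e gen Xpr (e1 Xpr) /\
   forall d : multideg n, totdeg d = 1 -> quasistable e gen Xpr d -> d =1 e1 Xpr)
  /\
  (* (ii) *)
  ((forall i : 'I_n, mdeg_alpha_smooth e gen Xpr i =1 e1 Xpr) /\
   (forall (a b : 'I_n) (Z0 : {set 'I_n}),
      e a b -> small_tail e gen Xpr Z0 -> (a \in Z0) != (b \in Z0) ->
      mdeg_alpha_node e gen Xpr a b Z0 =1 e1 Xpr)).
Proof.
case: Hsimple => esym eirr; case: Hct => econn ebr.
by apply: main_all.
Qed.
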